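(* There exists $n_0$ such that the following holds for all $n\ge n_0$. Let $T\in\mathbb{C}^{n\times n\times n\times n}$ with $\|T\|_F=1$, and let $M=n^2\max_{i,j,k,l}|T_{ijkl}|$. Let $\mathrm{OPT}_T=\max_{\vec x,\vec y,\vec u,\vec v\in\mathbb{C}^n\setminus\{0\}}\frac{|\langle T,\vec x\otimes\vec y\otimes\vec u\otimes\vec v\rangle|}{\|\vec x\|_2\|\vec y\|_2\|\vec u\|_2\|\vec v\|_2}$, let $|\psi_T\rangle=\sum_{i,j,k,l\in[n]}T_{ijkl}|e_i\rangle\otimes|e_j\rangle\otimes|e_k\rangle\otimes|e_l\rangle$ (a $4n$-qubit state), and let $\mathrm{OPT}_{\psi}=\max|\langle\sigma|\psi_T\rangle|$ over all $4n$-qubit pure product states $|\sigma\rangle=|\sigma_1\rangle\otimes\cdots\otimes|\sigma_{4n}\rangle$. Then \[ e^{-2}\mathrm{OPT}_T-\frac{10M}{n^{0.2}}\le\mathrm{OPT}_{\psi}\le e^{-2}\mathrm{OPT}_T+\frac{10}{n^{0.1}}+\frac{10M}{n^{0.2}}. \]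
   Context: $|e_i\rangle$ is the $n$-qubit computational basis state with $|1\rangle$ on qubit $i$ and $|0\rangle$ elsewhere. $\langle T,X\rangle=\sum_{ijkl}T_{ijkl}X_{ijkl}$, and $\|T\|_F$ is the Frobenius norm. *)

(* Defs.v *)
From HB Require Import structures.
From mathcomp Require Import all_boot all_order all_algebra.
From mathcomp Require Import complex.
From mathcomp Require Import boolp classical_sets reals sequences exp.
Set Implicit Arguments. Unset Strict Implicit. Unset Printing Implicit Defensive.
Import Order.TTheory GRing.Theory Num.Theory.
Local Open Scope ring_scope.

Section Defs.
Variable R : realType.
Local Notation C := (R[i]).

Definition cabs (z : C) : R := Num.sqrt ((complex.Re z) ^+ 2 + (complex.Im z) ^+ 2).

Definition vnorm2 n (x : 'I_n -> C) : R := Num.sqrt (\sum_i cabs (x i) ^+ 2).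

Definition tensor4 n := 'I_n -> 'I_n -> 'I_n -> 'I_n -> C.

Definition frob n (T : tensor4 n) : R :=
  Num.sqrt (\sum_i \sum_j \sum_k \sum_l cabs (T i j k l) ^+ 2).

Definition maxentry n (T : tensor4 n) : R :=
  \big[Num.max/0]_i \big[Num.max/0]_j \big[Num.max/0]_k \big[Num.max/0]_l
     cabs (T i j k l).

Definition tpair n (T : tensor4 n) (x y u v : 'I_n -> C) : C :=
  \sum_i \sum_j \sum_k \sum_l T i j k l * x i * y j * u k * v l.

Definition OPT_T n (T : tensor4 n) : R :=
  sup [set r : R | exists x y u v : 'I_n -> C,
        [/\ vnorm2 x != 0, vnorm2 y != 0, vnorm2 u != 0 & vnorm2 v != 0] /\
        r = cabs (tpair T x y u v) / (vnorm2 x * vnorm2 y * vnorm2 u * vnorm2 v)]%classic.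

(* Computational basis of 4n qubits: bitstrings b : 'I_(4n) -> bool
   (b q = true means qubit q is |1>).  Qubits are ordered blockwise: qubit
   q belongs to block q %/ n (0..3), position q %% n inside the block. *)
Definition bitstring n := {ffun 'I_(4 * n) -> bool}.

(* the basis string |e_i> (x) |e_j> (x) |e_k> (x) |e_l> *)
Definition basis4 n (i j k l : 'I_n) : bitstring n :=
  [ffun q : 'I_(4 * n) => (q %% n)%N == nth 0%N [:: val i; val j; val k; val l] (q %/ n)].

Definition psiT n (T : tensor4 n) (b : bitstring n) : C :=
  \sum_i \sum_j \sum_k \sum_l T i j k l * (b == basis4 i j k l)%:R.

(* a pure 4n-qubit product state: each factor sigma_q is a unit vector in C^2
   (amplitude of |0> is sigma q false, of |1> is sigma q true) *)
Definition unit_qubit (s : bool -> C) : Prop := cabs (s false) ^+ 2 + cabs (s true) ^+ 2 = 1.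

Definition overlap n (sigma : 'I_(4 * n) -> bool -> C) (psi : bitstring n -> C) : C :=
  \sum_(b : bitstring n) (\prod_q sigma q (b q))^* * psi b.

Definition OPT_psi n (T : tensor4 n) : R :=
  sup [set r : R | exists sigma : 'I_(4 * n) -> bool -> C,
        (forall q, unit_qubit (sigma q)) /\ r = cabs (overlap sigma (psiT T))]%classic.

End Defs.

(* Main.v *)
Require Import Defs.
From HB Require Import structures.
From mathcomp Require Import all_boot all_order all_algebra.
From mathcomp Require Import complex.
From mathcomp Require Import boolp classical_sets reals sequences exp.
From mathcomp Require Import ring lra.
Import Order.TTheory GRing.Theory Num.Theory.
Local Open Scope ring_scope.
Set Implicit Arguments. Unset Strict Implicit. Unset Printing Implicit Defensive.

Section S.
Variable R : realType.
Local Notation C := (R[i]).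

Lemma cabsE (z : C) : `|z| = (cabs z)%:C%C.
Proof. by rewrite normc_def. Qed.

Lemma cabs_ge0 (z : C) : 0 <= cabs z.
Proof. exact: sqrtr_ge0. Qed.

Lemma cabsM (z w : C) : cabs (z * w) = cabs z * cabs w.
Proof. by apply: complexI; rewrite rmorphM /= -!cabsE normrM. Qed.

Lemma cabsJ (z : C) : cabs (z^*) = cabs z.
Proof. by apply: complexI; rewrite -!cabsE norm_conjC. Qed.

Lemma cabsD (z w : C) : cabs (z + w) <= cabs z + cabs w.
Proof. by rewrite -lecR rmorphD /= -!cabsE ler_normD. Qed.

Lemma cabsR (r : R) : cabs (r%:C%C) = `|r|.
Proof.
apply: complexI; rewrite -!cabsE.
case: (lerP 0 r) => h.
  by rewrite ger0_norm ?ler0c // ger0_norm.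
by rewrite ltr0_norm ?ltr0_norm // ?rmorphN //= ltcR.
Qed.

Lemma cabs0 : cabs (0 : C) = 0.
Proof. by rewrite -(rmorph0 (real_complex R)) cabsR normr0. Qed.

Lemma cabs_eq0 (z : C) : cabs z = 0 -> z = 0.
Proof. by move=> h; apply/eqP; rewrite -normr_eq0 cabsE h. Qed.

Lemma cabsB (z w : C) : cabs (z - w) <= cabs z + cabs w.
Proof.
apply: (le_trans (cabsD _ _)); rewrite lerD2l.
by rewrite -lecR -!cabsE normrN.
Qed.

Lemma cabs_sum (I : Type) (s : seq I) (P : pred I) (F : I -> C) :
  cabs (\sum_(i <- s | P i) F i) <= \sum_(i <- s | P i) cabs (F i).
Proof.
elim/big_rec2: _ => [|i y x _ h]; first by rewrite cabs0.
by apply: (le_trans (cabsD _ _)); rewrite lerD2l.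
Qed.

Lemma cabs_prod (I : Type) (s : seq I) (P : pred I) (F : I -> C) :
  cabs (\prod_(i <- s | P i) F i) = \prod_(i <- s | P i) cabs (F i).
Proof.
elim/big_rec2: _ => [|i y x _ h].
  by rewrite -(rmorph1 (real_complex R)) cabsR normr1.
by rewrite cabsM h.
Qed.


Section S4.
Variable n : nat.
Definition s4 (V : nmodType) (F : 'I_n -> 'I_n -> 'I_n -> 'I_n -> V) : V :=
  \sum_i \sum_j \sum_k \sum_l F i j k l.

Lemma s4_eq (V : nmodType) (F G : 'I_n -> 'I_n -> 'I_n -> 'I_n -> V) :
  (forall i j k l, F i j k l = G i j k l) -> s4 F = s4 G.
Proof.
move=> h; apply: eq_bigr => i _; apply: eq_bigr => j _; apply: eq_bigr => k _.
by apply: eq_bigr => l _.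
Qed.

Lemma s4D (V : nmodType) (F G : 'I_n -> 'I_n -> 'I_n -> 'I_n -> V) :
  s4 F + s4 G = s4 (fun i j k l => F i j k l + G i j k l).
Proof.
rewrite /s4 -big_split; apply: eq_bigr => i _; rewrite -big_split.
apply: eq_bigr => j _; rewrite -big_split; apply: eq_bigr => k _.
by rewrite -big_split.
Qed.

Lemma s4_le (F G : 'I_n -> 'I_n -> 'I_n -> 'I_n -> R) :
  (forall i j k l, F i j k l <= G i j k l) -> s4 F <= s4 G.
Proof.
move=> h; apply: ler_sum => i _; apply: ler_sum => j _; apply: ler_sum => k _.
by apply: ler_sum => l _.
Qed.

Lemma s4_ge0 (F : 'I_n -> 'I_n -> 'I_n -> 'I_n -> R) :
  (forall i j k l, 0 <= F i j k l) -> 0 <= s4 F.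
Proof.
move=> h; apply: sumr_ge0 => i _; apply: sumr_ge0 => j _; apply: sumr_ge0 => k _.
by apply: sumr_ge0 => l _.
Qed.

Lemma s4_cabs (F : 'I_n -> 'I_n -> 'I_n -> 'I_n -> C) :
  cabs (s4 F) <= s4 (fun i j k l => cabs (F i j k l)).
Proof.
apply: (le_trans (cabs_sum _ _ _)); apply: ler_sum => i _.
apply: (le_trans (cabs_sum _ _ _)); apply: ler_sum => j _.
apply: (le_trans (cabs_sum _ _ _)); apply: ler_sum => k _.
exact: cabs_sum.
Qed.

Lemma s4_prod (f g h e : 'I_n -> R) :
  s4 (fun i j k l => f i * g j * h k * e l) =
  (\sum_i f i) * (\sum_j g j) * (\sum_k h k) * (\sum_l e l).
Proof.
rewrite /s4.
under eq_bigr do under eq_bigr do under eq_bigr do rewrite -big_distrr /=.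
under eq_bigr do under eq_bigr do rewrite -big_distrl /=.
under eq_bigr do rewrite -big_distrl /=.
rewrite -big_distrl /=; congr (_ * _).
under eq_bigr do under eq_bigr do rewrite -big_distrr /=.
under eq_bigr do rewrite -big_distrl /=.
rewrite -big_distrl /=; congr (_ * _).
under eq_bigr do rewrite -big_distrr /=.
by rewrite -big_distrl.
Qed.

Lemma s4_scale (a : R) (F : 'I_n -> 'I_n -> 'I_n -> 'I_n -> R) :
  a * s4 F = s4 (fun i j k l => a * F i j k l).
Proof.
rewrite /s4 big_distrr; apply: eq_bigr => i _.
rewrite big_distrr; apply: eq_bigr => j _.
rewrite big_distrr; apply: eq_bigr => k _.
by rewrite big_distrr.
Qed.

Lemma s4_scaleC (a : C) (F : 'I_n -> 'I_n -> 'I_n -> 'I_n -> C) :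
  a * s4 F = s4 (fun i j k l => a * F i j k l).
Proof.
rewrite /s4 big_distrr; apply: eq_bigr => i _.
rewrite big_distrr; apply: eq_bigr => j _.
rewrite big_distrr; apply: eq_bigr => k _.
by rewrite big_distrr.
Qed.

Lemma s4_opp (F : 'I_n -> 'I_n -> 'I_n -> 'I_n -> C) :
  - s4 F = s4 (fun i j k l => - F i j k l).
Proof.
rewrite /s4 -sumrN; apply: eq_bigr => i _.
rewrite -sumrN; apply: eq_bigr => j _.
rewrite -sumrN; apply: eq_bigr => k _.
by rewrite -sumrN.
Qed.


End S4.

Lemma amgm (l a b : R) : 0 < l -> a * b <= 2^-1 * l * a ^+ 2 + 2^-1 / l * b ^+ 2.
Proof.
move=> l0.
have h : 0 <= (l * a - b) ^+ 2 by apply: sqr_ge0.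
have e : 2^-1 / l * b ^+ 2 = 2^-1 * (l^-1 * b^+2) by ring.
rewrite e.
have hl : l * l^-1 = 1 by rewrite mulfV // gt_eqF.
have hinv : 0 < l^-1 by rewrite invr_gt0.
nra.
Qed.

Lemma bigmax_ge (I : finType) (F : I -> R) i0 : F i0 <= \big[Num.max/0]_i F i.
Proof. by rewrite (bigD1 i0) //= le_max lexx. Qed.

Lemma bigmax_ge0 (I : finType) (F : I -> R) : (forall i, 0 <= F i) ->
  0 <= \big[Num.max/0]_i F i.
Proof.
move=> h; elim/big_ind: _ => //; by move=> x y hx hy; rewrite le_max hx.
Qed.

Lemma cabs_le_max n (T : tensor4 R n) i j k l : cabs (T i j k l) <= maxentry T.
Proof.
apply: (le_trans _ (bigmax_ge _ i)).
apply: (le_trans _ (bigmax_ge _ j)).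
apply: (le_trans _ (bigmax_ge _ k)).
exact: (bigmax_ge _ l).
Qed.

Lemma maxentry_ge0 n (T : tensor4 R n) : 0 <= maxentry T.
Proof.
apply: bigmax_ge0 => i; apply: bigmax_ge0 => j; apply: bigmax_ge0 => k.
by apply: bigmax_ge0 => l; apply: cabs_ge0.
Qed.

Lemma tpair_bound n (T : tensor4 R n) x y u v :
  cabs (tpair T x y u v) <=
  maxentry T * (\sum_i cabs (x i)) * (\sum_j cabs (y j)) * (\sum_k cabs (u k))
     * (\sum_l cabs (v l)).
Proof.
apply: (le_trans (s4_cabs _)).
set a := \sum_i cabs (x i); set b := \sum_j cabs (y j).
set c := \sum_k cabs (u k); set d := \sum_l cabs (v l).
have -> : maxentry T * a * b * c * d = maxentry T * (a * b * c * d) by rewrite !mulrA.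
rewrite /a /b /c /d -s4_prod s4_scale.
apply: s4_le => i j k l; rewrite !cabsM.
rewrite -!mulrA ler_wpM2r ?cabs_le_max //.
by rewrite !mulr_ge0 ?cabs_ge0.
Qed.

Lemma tpair_dec n (T : tensor4 R n) x y u v xs ys us vs :
  tpair T x y u v = tpair T xs ys us vs + tpair T (fun i => x i - xs i) y u v
    + tpair T xs (fun i => y i - ys i) u v + tpair T xs ys (fun i => u i - us i) v
    + tpair T xs ys us (fun i => v i - vs i).
Proof.
rewrite /tpair -/(s4 _) -/(s4 _) -/(s4 _) -/(s4 _) -/(s4 _) -/(s4 _) !s4D.
by apply: s4_eq => i j k l; ring.
Qed.

Lemma tpair_scale n (T : tensor4 R n) x y u v (a b c d : C) :
  tpair T (fun i => a * x i) (fun i => b * y i) (fun i => c * u i) (fun i => d * v i)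
  = a * b * c * d * tpair T x y u v.
Proof.
rewrite /tpair -/(s4 _) -/(s4 _) s4_scaleC.
by apply: s4_eq => i j k l; ring.
Qed.

Definition N2 n (x : 'I_n -> C) := \sum_i cabs (x i) ^+ 2.

Lemma N2_ge0 n (x : 'I_n -> C) : 0 <= N2 x.
Proof. by apply: sumr_ge0 => i _; rewrite sqr_ge0. Qed.

Lemma vnorm2_sqr n (x : 'I_n -> C) : vnorm2 x ^+ 2 = N2 x.
Proof. by rewrite /vnorm2 sqr_sqrtr // N2_ge0. Qed.

Lemma l1_le n (x : 'I_n -> C) : (0 < n)%N -> N2 x <= 1 ->
  \sum_i cabs (x i) <= Num.sqrt n%:R.
Proof.
move=> n0 hx.
set s := Num.sqrt n%:R.
have s0 : 0 < s by rewrite sqrtr_gt0 ltr0n.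
have ss : s ^+ 2 = n%:R by rewrite sqr_sqrtr ?ler0n.
have h : forall i, cabs (x i) <= 2^-1 * s^-1 * 1 ^+ 2 + 2^-1 / s^-1 * cabs (x i) ^+ 2.
  by move=> i; rewrite -[X in X <= _]mul1r; apply: amgm; rewrite invr_gt0.
apply: (le_trans (ler_sum _ (fun i _ => h i))).
rewrite big_split /= -!big_distrr /= -/(N2 x) sumr_const card_ord.
rewrite invrK mul1r -ss.
have hs2 : 2^-1 / s * s^+2 = 2^-1 * s by field; rewrite gt_eqF.
rewrite hs2.
nra.
Qed.


Lemma vnorm2_ge0 n (x : 'I_n -> C) : 0 <= vnorm2 x.
Proof. exact: sqrtr_ge0. Qed.

Lemma vnorm2_0 n (x : 'I_n -> C) : vnorm2 x = 0 -> \sum_i cabs (x i) = 0.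
Proof.
move=> h.
have h2 : N2 x = 0 by rewrite -vnorm2_sqr h expr0n.
have := psumr_eq0P (fun i _ => sqr_ge0 (cabs (x i))) h2 => hi.
apply: big1 => i _; have := hi i isT; move/eqP; rewrite expf_eq0 /= => /eqP //.
Qed.

Lemma frob_s4 n (T : tensor4 R n) : frob T = 1 ->
  s4 (fun i j k l => cabs (T i j k l) ^+ 2) = 1.
Proof.
move=> h; have := sqr_sqrtr (s4_ge0 (fun i j k l => sqr_ge0 (cabs (T i j k l)))).
by rewrite -/(s4 _) => <-; rewrite /frob in h; rewrite -/(s4 _) in h; rewrite h expr1n.
Qed.

Lemma tpair_frob n (T : tensor4 R n) x y u v : frob T = 1 ->
  cabs (tpair T x y u v) <= vnorm2 x * vnorm2 y * vnorm2 u * vnorm2 v.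
Proof.
move=> hT.
set N := vnorm2 x * vnorm2 y * vnorm2 u * vnorm2 v.
have N0 : 0 <= N by rewrite !mulr_ge0 ?vnorm2_ge0.
case: (eqVneq N 0) => hN.
  apply: (le_trans (tpair_bound _ _ _ _ _)); rewrite hN.
  move/eqP: hN; rewrite /N !mulf_eq0 -!orbA => /or4P [] /eqP /vnorm2_0 ->;
   by rewrite ?mulr0 ?mul0r.
have Np : 0 < N by rewrite lt0r hN.
apply: (le_trans (s4_cabs _)).
apply: (@le_trans _ _ (s4 (fun i j k l => 2^-1 * N * cabs (T i j k l) ^+ 2 +
   2^-1 / N * (cabs (x i) ^+ 2 * cabs (y j) ^+ 2 * cabs (u k) ^+ 2 * cabs (v l) ^+ 2)))).
  apply: s4_le => i j k l.
  have -> : cabs (T i j k l * x i * y j * u k * v l) =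
     cabs (T i j k l) * (cabs (x i) * cabs (y j) * cabs (u k) * cabs (v l)).
    by rewrite !cabsM !mulrA.
  have -> : cabs (x i) ^+ 2 * cabs (y j) ^+ 2 * cabs (u k) ^+ 2 * cabs (v l) ^+ 2 =
    (cabs (x i) * cabs (y j) * cabs (u k) * cabs (v l)) ^+ 2 by rewrite !exprMn.
  exact: amgm.
rewrite -s4D -!s4_scale (frob_s4 hT) s4_prod -!/(N2 _) -!vnorm2_sqr.
have -> : vnorm2 x ^+ 2 * vnorm2 y ^+ 2 * vnorm2 u ^+ 2 * vnorm2 v ^+ 2 = N ^+ 2
  by rewrite /N !exprMn.
rewrite le_eqVlt; apply/orP; left; apply/eqP; field.
by rewrite gt_eqF.
Qed.

Definition setT_ n (T : tensor4 R n) := [set r : R | exists x y u v : 'I_n -> C,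
        [/\ vnorm2 x != 0, vnorm2 y != 0, vnorm2 u != 0 & vnorm2 v != 0] /\
        r = cabs (tpair T x y u v) / (vnorm2 x * vnorm2 y * vnorm2 u * vnorm2 v)]%classic.

Lemma OPT_T_E n (T : tensor4 R n) : OPT_T T = sup (setT_ T).
Proof. by []. Qed.

Lemma cabs1 : cabs (1 : C) = 1.
Proof. by rewrite -(rmorph1 (real_complex R)) cabsR normr1. Qed.

Lemma setT_ne n (T : tensor4 R n) : (0 < n)%N -> (setT_ T !=set0)%classic.
Proof.
move=> n0.
have h1 : vnorm2 (fun _ : 'I_n => (1 : C)) != 0.
  rewrite /vnorm2 sqrtr_eq0 -ltNge; under eq_bigr do rewrite cabs1 expr1n.
  by rewrite sumr_const card_ord ltr0n.
by exists (cabs (tpair T (fun=> 1) (fun=> 1) (fun=> 1) (fun=> 1)) /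
   (vnorm2 (fun _ : 'I_n => (1 : C)) ^+ 4)); do 4 exists (fun=> 1);
  split; [by split | by rewrite !exprS expr0 mulr1 !mulrA].
Qed.

Lemma setT_ub n (T : tensor4 R n) : frob T = 1 -> ubound (setT_ T) 1.
Proof.
move=> hT r [x [y [u [v [[hx hy hu hv] ->]]]]].
have Np : 0 < vnorm2 x * vnorm2 y * vnorm2 u * vnorm2 v.
  by rewrite !mulr_gt0 // lt0r ?hx ?hy ?hu ?hv ?vnorm2_ge0.
by rewrite ler_pdivrMr // mul1r tpair_frob.
Qed.

Lemma has_sup_T n (T : tensor4 R n) : (0 < n)%N -> frob T = 1 -> has_sup (setT_ T).
Proof. by move=> n0 hT; split; [exact: setT_ne | exists 1; exact: setT_ub]. Qed.

Lemma OPT_T_le1 n (T : tensor4 R n) : (0 < n)%N -> frob T = 1 -> OPT_T T <= 1.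
Proof. by move=> n0 hT; apply: ge_sup; [exact: setT_ne | exact: setT_ub]. Qed.

Lemma setT_ge0 n (T : tensor4 R n) r : setT_ T r -> 0 <= r.
Proof.
move=> [x [y [u [v [_ ->]]]]].
by rewrite divr_ge0 ?cabs_ge0 // !mulr_ge0 ?vnorm2_ge0.
Qed.

Lemma OPT_T_ge0 n (T : tensor4 R n) : (0 < n)%N -> frob T = 1 -> 0 <= OPT_T T.
Proof.
move=> n0 hT; have [r hr] := setT_ne T n0.
by apply: (le_trans (setT_ge0 hr)); apply: sup_upper_bound => //; exact: has_sup_T.
Qed.

Lemma tpair_opt n (T : tensor4 R n) x y u v : (0 < n)%N -> frob T = 1 ->
  cabs (tpair T x y u v) <= OPT_T T * (vnorm2 x * vnorm2 y * vnorm2 u * vnorm2 v).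
Proof.
move=> n0 hT.
set N := vnorm2 x * vnorm2 y * vnorm2 u * vnorm2 v.
have N0 : 0 <= N by rewrite !mulr_ge0 ?vnorm2_ge0.
case: (eqVneq N 0) => hN.
  apply: (le_trans (tpair_frob _ _ _ _ hT)); by rewrite -/N hN mulr0.
have Np : 0 < N by rewrite lt0r hN.
have hr : setT_ T (cabs (tpair T x y u v) / N).
  exists x, y, u, v; split => //.
  move: hN; rewrite /N !mulf_eq0 !negb_or => /andP [/andP [/andP [? ?] ?] ?].
  by split.
have := sup_upper_bound (has_sup_T n0 hT) hr.
by rewrite -OPT_T_E ler_pdivrMr.
Qed.


Lemma qidx_subproof n (m : 'I_4) (r : 'I_n) : (m * n + r < 4 * n)%N.
Proof.
have hm := ltn_ord m; have hr := ltn_ord r.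
have : (m * n + r < m * n + n)%N by rewrite ltn_add2l.
move=> h; apply: (leq_trans h).
have -> : (m * n + n = m.+1 * n)%N by rewrite mulSn addnC.
by rewrite leq_mul2r hm orbT.
Qed.

Definition qidx n (m : 'I_4) (r : 'I_n) : 'I_(4 * n) := Ordinal (qidx_subproof m r).

Lemma qidx_div n (m : 'I_4) (r : 'I_n) : (qidx m r %/ n)%N = m.
Proof.
rewrite /= divnMDl; last by apply: (leq_ltn_trans _ (ltn_ord r)).
by rewrite divn_small ?addn0.
Qed.

Lemma qidx_mod n (m : 'I_4) (r : 'I_n) : (qidx m r %% n)%N = r.
Proof. by rewrite /= modnMDl modn_small. Qed.

Lemma prod_blocks n (n0 : (0 < n)%N) (F : 'I_(4 * n) -> C) :
  \prod_q F q = \prod_(m < 4) \prod_(r < n) F (qidx m r).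
Proof.
rewrite pair_big /= (reindex (fun p : 'I_4 * 'I_n => qidx p.1 p.2)) //.
have hd : forall q : 'I_(4 * n), (q %/ n < 4)%N.
  by move=> q; rewrite ltn_divLR // mulnC ltn_ord.
have hm : forall q : 'I_(4 * n), (q %% n < n)%N by move=> q; rewrite ltn_pmod.
apply: onW_bij.
exists (fun q => (Ordinal (hd q), Ordinal (hm q))).
  move=> [m r] /=; congr pair; apply: val_inj => /=.
    exact: qidx_div.
  exact: qidx_mod.
move=> q; apply: val_inj => /=.
by rewrite -divn_eq.
Qed.

Definition W n (sigma : 'I_(4 * n) -> bool -> C) (m : 'I_4) (i : 'I_n) : C :=
  (\prod_(r < n) sigma (qidx m r) (val r == val i))^*.

Lemma overlap_psi n (sigma : 'I_(4 * n) -> bool -> C) (T : tensor4 R n) :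
  overlap sigma (psiT T) =
  s4 (fun i j k l => T i j k l * (\prod_q sigma q (basis4 i j k l q))^*).
Proof.
rewrite /overlap /psiT.
under eq_bigr do rewrite big_distrr /=.
under eq_bigr do under eq_bigr do rewrite big_distrr /=.
under eq_bigr do under eq_bigr do under eq_bigr do rewrite big_distrr /=.
under eq_bigr do under eq_bigr do under eq_bigr do under eq_bigr do rewrite big_distrr /=.
rewrite exchange_big /s4; apply: eq_bigr => i _.
rewrite exchange_big; apply: eq_bigr => j _.
rewrite exchange_big; apply: eq_bigr => k _.
rewrite exchange_big; apply: eq_bigr => l _.
rewrite (bigD1 (basis4 i j k l)) //= eqxx (mulr1 (T i j k l)) [X in _ + X]big1; last first.
  by move=> b hb; rewrite (negbTE hb) !mulr0.
by rewrite addr0 mulrC.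
Qed.

Lemma overlap_W n (n0 : (0 < n)%N) (sigma : 'I_(4 * n) -> bool -> C) (T : tensor4 R n) :
  overlap sigma (psiT T) =
  tpair T (W sigma ord0) (W sigma (lift ord0 ord0)) (W sigma (lift ord0 (lift ord0 ord0)))
    (W sigma (lift ord0 (lift ord0 (lift ord0 ord0)))).
Proof.
rewrite overlap_psi /tpair; apply: s4_eq => i j k l.
rewrite (prod_blocks n0) !big_ord_recl big_ord0 mulr1 /W !rmorphM /= !mulrA.
congr (_ * _ * _ * _ * _); apply: congr1; apply: eq_bigr => r _;
  by rewrite ffunE qidx_div qidx_mod.
Qed.


Lemma prod_recr_pred n (h : 'I_n.+1 -> R) (i : 'I_n) :
  \prod_(r | r != widen_ord (leqnSn n) i) h r =
  (\prod_(r < n | r != i) h (widen_ord (leqnSn n) r)) * h ord_max.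
Proof.
rewrite big_mkcond big_ord_recr /= [X in _ = X * _]big_mkcond.
have -> : (ord_max != widen_ord (leqnSn n) i) = true.
  by rewrite -val_eqE /= neq_ltn ltn_ord orbT.
by [].
Qed.

Lemma prod_recr_max n (h : 'I_n.+1 -> R) :
  \prod_(r | r != ord_max) h r = \prod_(r < n) h (widen_ord (leqnSn n) r).
Proof.
rewrite big_mkcond big_ord_recr /= eqxx mulr1 big_mkcond; apply: eq_bigr => r _.
have -> : (widen_ord (leqnSn n) r != ord_max) = true.
  by rewrite -val_eqE /= neq_ltn ltn_ord.
by [].
Qed.

Lemma one_le n (f : 'I_n -> R) : (forall r, 0 <= f r <= 1) ->
  \sum_i f i * \prod_(r | r != i) (1 - f r) + \prod_r (1 - f r) <= 1.
Proof.
elim: n f => [|n IH] f hf; first by rewrite big_ord0 big_ord0 add0r.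
set g := fun r : 'I_n => f (widen_ord (leqnSn n) r).
have hg : forall r, 0 <= g r <= 1 by move=> r; apply: hf.
have := IH g hg.
set A := \sum_i g i * \prod_(r | r != i) (1 - g r).
set P := \prod_r (1 - g r).
move=> hAP.
have A0 : 0 <= A.
  apply: sumr_ge0 => i _; apply: mulr_ge0; first by case/andP: (hg i).
  by apply: prodr_ge0 => r _; case/andP: (hg r) => _ h; rewrite subr_ge0.
have P0 : 0 <= P.
  by apply: prodr_ge0 => r _; case/andP: (hg r) => _ h; rewrite subr_ge0.
rewrite big_ord_recr /= prod_recr_max big_ord_recr /=.
under eq_bigr do rewrite prod_recr_pred mulrA.
rewrite -big_distrl /= -/A -/P.
have := hf ord_max; set c := f ord_max => /andP [c0 c1].
nra.
Qed.

Lemma one_minus_le_exp (x : R) : 1 - x <= expR (- x).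
Proof. by have := expR_ge1Dx (- x). Qed.

Lemma xexp_le (x : R) : x * expR (- x) <= expR (-1).
Proof.
have h := expR_ge1Dx (x - 1).
rewrite addrC subrK expRD in h.
have hp := expR_gt0 (- x).
have e : expR x * expR (- x) = 1 by rewrite expRxMexpNx_1.
have := ler_wpM2r (ltW hp) h.
by rewrite mulrAC e mul1r.
Qed.

Lemma small_bound n (f : 'I_n -> R) (d : R) : (forall r, 0 <= f r <= 1) ->
  (1 - d) * \sum_(i | f i <= d) f i * \prod_(r | r != i) (1 - f r) <= expR (-1).
Proof.
move=> hf.
set P := \prod_r (1 - f r).
set Q := \sum_r f r.
have fP : forall i, 0 <= f i by move=> i; case/andP: (hf i).
have fP1 : forall i, 0 <= 1 - f i by move=> i; case/andP: (hf i) => _ h; rewrite subr_ge0.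
have hP : P <= expR (- Q).
  rewrite -sumrN expR_sum; apply: ler_prod => r _.
  by rewrite fP1 one_minus_le_exp.
have Q0 : 0 <= Q by apply: sumr_ge0.
apply: (@le_trans _ _ (Q * P)); last first.
  apply: (le_trans _ (xexp_le Q)); apply: ler_wpM2l => //.
rewrite big_distrr /=.
apply: (@le_trans _ _ (\sum_(i | f i <= d) f i * P)).
  apply: ler_sum => i hi.
  rewrite /P [X in _ <= _ * X](bigD1 i) //= mulrCA.
  apply: ler_wpM2l => //; apply: ler_wpM2r.
    by apply: prodr_ge0 => r _.
  by rewrite lerD2l lerN2.
rewrite -big_distrl /= ler_wpM2r //; first by apply: prodr_ge0 => r _.
rewrite [X in _ <= X](bigID (fun i => f i <= d)) /= lerDl.
by apply: sumr_ge0.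
Qed.


Lemma kbound (rho d : R) (k : nat) : 0 < d -> d <= 2^-1 -> 0 <= rho ->
  rho ^+ 2 <= 1 - d -> rho ^+ k.-1 *+ k <= 2 / d.
Proof.
move=> d0 d1 r0 r2.
have hd2 : 0 <= 2 / d by rewrite divr_ge0 // ltW.
case: k => [|k] /=; first by rewrite mulr0n.
set e := expR (- (d / 2)).
have e0 : 0 <= e by rewrite expR_ge0.
have hre : rho <= e.
  have : rho ^+ 2 <= e ^+ 2.
    apply: (le_trans r2); rewrite -expRM_natl.
    have -> : 2%:R * - (d / 2) = - d by field.
    exact: one_minus_le_exp.
  by rewrite ler_pXn2r // ?nnegrE.
have hrk : rho ^+ k <= e ^+ k by rewrite lerXn2r // ?nnegrE.
have hek : e ^+ k = expR (- (k%:R * d / 2)).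
  by rewrite /e -expRM_natl; congr expR; rewrite mulrN mulrA.
have hx := xexp_le (k%:R * d / 2).
have h1 : expR (-1 : R) <= 2^-1.
  have h := expR_ge1Dx (1 : R).
  have h2 := expRxMexpNx_1 (1 : R).
  have h3 := expR_gt0 (-1 : R).
  nra.
have r1 : rho <= 1.
  have : rho ^+ 2 <= 1 ^+ 2 by rewrite expr1n; lra.
  by rewrite ler_pXn2r // ?nnegrE.
have hrk1 : rho ^+ k <= 1 by rewrite exprn_ile1.
have hk0 : 0 <= k%:R :> R by rewrite ler0n.
rewrite -hek in hx.
have hkr : k%:R * rho ^+ k <= d^-1.
  have := ler_wpM2l hk0 hrk.
  move=> hh; apply: (le_trans hh).
  have hx' : k%:R * d / 2 * e ^+ k <= 2^-1 by lra.
  have -> : k%:R * e ^+ k = (2 / d) * (k%:R * d / 2 * e ^+ k).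
    by field; rewrite gt_eqF.
  apply: (@le_trans _ _ ((2/d) * 2^-1)); first by rewrite ler_wpM2l.
  rewrite le_eqVlt; apply/orP; left; apply/eqP; field; rewrite gt_eqF //.
rewrite [X in X <= _]mulrS -(mulr_natr (rho ^+ k)) (mulrC (rho ^+ k)) addrC.
have hdi : d^-1 + 1 <= 2 / d.
  have -> : 2 / d = d^-1 + d^-1 by field; rewrite gt_eqF.
  rewrite lerD2l invf_ge1 //; lra.
by apply: (le_trans _ hdi); apply: lerD.
Qed.

Lemma big_bound n (a b : 'I_n -> R) (d : R) :
  (forall r, 0 <= a r) -> (forall r, 0 <= b r) ->
  (forall r, a r ^+ 2 + b r ^+ 2 = 1) -> 0 < d -> d <= 2^-1 ->
  \sum_(i | d < b i ^+ 2) b i * \prod_(r | r != i) a r <= 2 / d.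
Proof.
move=> a0 b0 ab d0 d1.
set B := [pred i | d < b i ^+ 2].
set rho := Num.sqrt (1 - d).
have rho0 : 0 <= rho by apply: sqrtr_ge0.
have rho2 : rho ^+ 2 = 1 - d by rewrite sqr_sqrtr //; lra.
have a1 : forall r, a r <= 1.
  move=> r; have := ab r; have := sqr_ge0 (b r) => h1 h2.
  have : a r ^+ 2 <= 1 ^+ 2 by rewrite expr1n; lra.
  by rewrite ler_pXn2r // ?nnegrE.
have b1 : forall r, b r <= 1.
  move=> r; have := ab r; have := sqr_ge0 (a r) => h1 h2.
  have : b r ^+ 2 <= 1 ^+ 2 by rewrite expr1n; lra.
  by rewrite ler_pXn2r // ?nnegrE.
have aB : forall r, r \in B -> a r <= rho.
  move=> r; rewrite inE /= => hr.
  rewrite -(ger0_norm (a0 r)) -sqrtr_sqr; apply: ler_wsqrtr.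
  have := ab r; lra.
have hterm : forall i, i \in B -> b i * \prod_(r | r != i) a r <= rho ^+ (#|B|.-1).
  move=> i hi.
  rewrite (bigID (mem B)) /=.
  have hp1 : \prod_(r | (r != i) && ~~ (r \in B)) a r <= 1.
    by apply: prodr_ile1 => r _; rewrite a0 a1.
  have hp0 : 0 <= \prod_(r | (r != i) && ~~ (r \in B)) a r.
    by apply: prodr_ge0.
  have hq : \prod_(r | (r != i) && (r \in B)) a r <= rho ^+ (#|B|.-1).
    have -> : (#|B|.-1 = #|[predD1 B & i]|)%N.
      by rewrite (cardD1 i B) hi.
    rewrite -prodr_const; apply: ler_prod => r /andP [h1 h2].
    by rewrite a0 aB.
  have hq0 : 0 <= \prod_(r | (r != i) && (r \in B)) a r by apply: prodr_ge0.
  have hrk : 0 <= rho ^+ (#|B|.-1) by apply: exprn_ge0.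
  have := b0 i; have := b1 i.
  set x := \prod_(r | (r != i) && (r \in B)) a r.
  set y := \prod_(r | (r != i) && ~~ (r \in B)) a r.
  move=> h1 h2.
  have hxy : x * y <= x by rewrite ler_piMr.
  have : b i * (x * y) <= 1 * x by apply: ler_pM; rewrite ?mulr_ge0.
  by rewrite mul1r => h; apply: (le_trans h hq).
apply: (@le_trans _ _ (\sum_(i in B) rho ^+ (#|B|.-1))).
  by apply: ler_sum => i hi; apply: hterm.
rewrite sumr_const; apply: kbound => //; lra.
Qed.


Section Block.
Variable n : nat.
Variable sigma : 'I_(4 * n) -> bool -> C.
Hypothesis hs : forall q, unit_qubit (sigma q).
Variable m : 'I_4.

Let a r := cabs (sigma (qidx m r) false).
Let b r := cabs (sigma (qidx m r) true).

Lemma ab1 r : a r ^+ 2 + b r ^+ 2 = 1.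
Proof. exact: hs. Qed.

Lemma cabsW i : cabs (W sigma m i) = b i * \prod_(r | r != i) a r.
Proof.
rewrite /W cabsJ cabs_prod (bigD1 i) //= eqxx; congr (_ * _).
apply: eq_bigr => r hr.
have -> : (val r == val i) = false by rewrite val_eqE; apply/negbTE.
by [].
Qed.

Definition f r := b r ^+ 2.

Lemma f01 r : 0 <= f r <= 1.
Proof.
rewrite /f sqr_ge0 /=; have := ab1 r; have := sqr_ge0 (a r); lra.
Qed.

Lemma cabsW2 i : cabs (W sigma m i) ^+ 2 = f i * \prod_(r | r != i) (1 - f r).
Proof.
rewrite cabsW exprMn -prodrXl; congr (_ * _); apply: eq_bigr => r _.
by rewrite /f; have := ab1 r; lra.
Qed.

Lemma W_N2 : N2 (W sigma m) <= 1.
Proof.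
rewrite /N2; under eq_bigr do rewrite cabsW2.
have := one_le f01.
have : 0 <= \prod_r (1 - f r).
  by apply: prodr_ge0 => r _; have := f01 r; lra.
lra.
Qed.

Definition Ws (d : R) i := if f i <= d then W sigma m i else 0.

Lemma Ws_N2 d : 0 < d < 1 -> N2 (Ws d) <= expR (-1) / (1 - d).
Proof.
move=> /andP [d0 d1].
have hd : 0 < 1 - d by lra.
rewrite ler_pdivlMr // mulrC.
apply: (le_trans _ (small_bound d f01)).
apply: ler_wpM2l; first lra.
rewrite /N2 [X in _ <= X]big_mkcond /=; apply: ler_sum => i _.
rewrite /Ws; case: ifP => _; first by rewrite cabsW2.
by rewrite cabs0 expr0n.
Qed.

Lemma Ws_N2le d : N2 (Ws d) <= 1.
Proof.
apply: le_trans W_N2; apply: ler_sum => i _; rewrite /Ws; case: ifP => _ //.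
by rewrite cabs0 expr0n sqr_ge0.
Qed.

Lemma Wb_l1 d : 0 < d -> d <= 2^-1 ->
  \sum_i cabs (W sigma m i - Ws d i) <= 2 / d.
Proof.
move=> d0 d1.
apply: le_trans (big_bound (a := a) (b := b) _ _ ab1 d0 d1);
  [|by move=> r; apply: cabs_ge0|by move=> r; apply: cabs_ge0].
rewrite [X in X <= _](bigID (fun i => d < b i ^+ 2)) /=.
rewrite [X in _ + X <= _]big1 ?addr0.
  apply: ler_sum => i hi; rewrite /Ws /f.
  by rewrite (leNgt (b i ^+ 2) d) hi /= subr0 cabsW.
move=> i; rewrite /Ws /f -leNgt => ->; by rewrite subrr cabs0.
Qed.

End Block.


Lemma conjR (r : R) : (r%:C%C)^* = r%:C%C.
Proof. exact: (conjc_real r). Qed.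

Definition setP_ n (T : tensor4 R n) := [set r : R | exists sigma : 'I_(4 * n) -> bool -> C,
        (forall q, unit_qubit (sigma q)) /\ r = cabs (overlap sigma (psiT T))]%classic.

Lemma OPT_psi_E n (T : tensor4 R n) : OPT_psi T = sup (setP_ T).
Proof. by []. Qed.

Lemma unit_le1 (s : bool -> C) b : unit_qubit s -> cabs (s b) <= 1.
Proof.
rewrite /unit_qubit => h.
have h0 := cabs_ge0 (s b).
have : cabs (s b) ^+ 2 <= 1 ^+ 2.
  rewrite expr1n; have := sqr_ge0 (cabs (s true));
   have := sqr_ge0 (cabs (s false)); clear h0; case: b; lra.
by rewrite ler_pXn2r // ?nnegrE.
Qed.

Lemma setP_ne n (T : tensor4 R n) : (setP_ T !=set0)%classic.
Proof.
exists (cabs (overlap (fun _ b => if b then 0 else 1) (psiT T))).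
exists (fun _ b => if b then 0 else 1); split => // q.
by rewrite /unit_qubit /= cabs0 cabs1 expr0n expr1n addr0.
Qed.

Lemma setP_ub n (T : tensor4 R n) : ubound (setP_ T) (\sum_b cabs (psiT T b)).
Proof.
move=> r [sigma [hs ->]].
apply: (le_trans (cabs_sum _ _ _)); apply: ler_sum => b _.
rewrite cabsM cabsJ cabs_prod ler_piMl ?cabs_ge0 //.
apply: prodr_ile1 => q _; rewrite cabs_ge0 /=; exact: unit_le1.
Qed.

Lemma has_sup_P n (T : tensor4 R n) : has_sup (setP_ T).
Proof. split; [exact: setP_ne | by exists (\sum_b cabs (psiT T b)); exact: setP_ub]. Qed.

Lemma overlap_le_opt n (T : tensor4 R n) sigma : (forall q, unit_qubit (sigma q)) ->
  cabs (overlap sigma (psiT T)) <= OPT_psi T.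
Proof.
move=> hs; rewrite OPT_psi_E; apply: sup_upper_bound; first exact: has_sup_P.
by exists sigma.
Qed.

Lemma sqrt_le_exp (t : R) : 0 <= t -> Num.sqrt (1 + t) <= expR (t / 2).
Proof.
move=> t0.
rewrite -(ger0_norm (expR_ge0 (t / 2))) -sqrtr_sqr; apply: ler_wsqrtr.
rewrite -expRM_natl.
have -> : 2%:R * (t / 2) = t by field.
exact: expR_ge1Dx.
Qed.

Section Lower.
Variable n : nat.
Hypothesis n0 : (0 < n)%N.

Definition sc (z : 'I_n -> C) r : R := (Num.sqrt (1 + cabs (z r) ^+ 2))^-1.

Lemma sc_gt0 z r : 0 < sc z r.
Proof. by rewrite /sc invr_gt0 sqrtr_gt0; have := sqr_ge0 (cabs (z r)); lra. Qed.

Lemma sc_sqr z r : sc z r ^+ 2 * (1 + cabs (z r) ^+ 2) = 1.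
Proof.
rewrite /sc exprVn sqr_sqrtr; last by have := sqr_ge0 (cabs (z r)); lra.
by rewrite mulVf // gt_eqF //; have := sqr_ge0 (cabs (z r)); lra.
Qed.

Lemma prod_sc z : N2 z = 1 -> expR (- (2^-1)) <= \prod_r sc z r.
Proof.
move=> hz.
have -> : - (2^-1) = \sum_r (- (cabs (z r) ^+ 2 / 2)) :> R.
  by rewrite sumrN -mulr_suml -/(N2 z) hz mul1r.
rewrite expR_sum; apply: ler_prod => r _; rewrite expR_ge0 /=.
rewrite /sc expRN lef_pV2 ?posrE ?expR_gt0 ?sqrtr_gt0 //.
  by apply: sqrt_le_exp; apply: sqr_ge0.
by have := sqr_ge0 (cabs (z r)); lra.
Qed.

Variables zx zy zu zv : 'I_n -> C.
Definition sel (k : nat) : 'I_n -> C :=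
  if k == 0%N then zx else if k == 1%N then zy else if k == 2%N then zu else zv.

Definition sig (q : 'I_(4 * n)) (b : bool) : C :=
  let z := sel (q %/ n) in let r := Ordinal (ltn_pmod q n0) in
  if b then (z r)^* * (sc z r)%:C%C else (sc z r)%:C%C.

Lemma sig_qidx m r b : sig (qidx m r) b =
  if b then (sel m r)^* * (sc (sel m) r)%:C%C else (sc (sel m) r)%:C%C.
Proof.
rewrite /sig.
have -> : Ordinal (ltn_pmod (qidx m r) n0) = r by apply: val_inj; rewrite /= qidx_mod.
by rewrite qidx_div.
Qed.

Lemma sig_unit q : unit_qubit (sig q).
Proof.
rewrite /unit_qubit /sig /=.
set z := sel (q %/ n); set r := Ordinal _.
rewrite cabsM cabsJ !cabsR ger0_norm ?(ltW (sc_gt0 _ _)) //.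
have := sc_sqr z r; lra.
Qed.

Lemma W_sig m i : W sig m i = sel m i * (\prod_r sc (sel m) r)%:C%C.
Proof.
rewrite /W (bigD1 i) //= sig_qidx eqxx.
rewrite (eq_bigr (fun r => (sc (sel m) r)%:C%C)); last first.
  move=> r hr; rewrite sig_qidx.
  by have -> : (val r == val i) = false by rewrite val_eqE; apply/negbTE.
rewrite -rmorph_prod !rmorphM /= conjCK !conjR -mulrA -rmorphM /=.
by rewrite [in RHS](bigD1 i).
Qed.

End Lower.


Lemma tpair_ext n (T : tensor4 R n) x y u v x' y' u' v' :
  (forall i, x i = x' i) -> (forall i, y i = y' i) -> (forall i, u i = u' i) ->
  (forall i, v i = v' i) -> tpair T x y u v = tpair T x' y' u' v'.
Proof.
move=> hx hy hu hv; rewrite /tpair -/(s4 _) -/(s4 _); apply: s4_eq => i j k l.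
by rewrite hx hy hu hv.
Qed.

Definition nz n (x : 'I_n -> C) i := ((vnorm2 x)^-1)%:C%C * x i.

Lemma N2_nz n (x : 'I_n -> C) : vnorm2 x != 0 -> N2 (nz x) = 1.
Proof.
move=> h; rewrite /N2 /nz.
under eq_bigr do rewrite cabsM cabsR exprMn.
rewrite -big_distrr /= -/(N2 x) -vnorm2_sqr ger0_norm ?invr_ge0 ?vnorm2_ge0 //.
by rewrite exprVn mulVf // expf_eq0.
Qed.

Lemma lower_elem n (n0 : (0 < n)%N) (T : tensor4 R n) r :
  setT_ T r -> expR (-2) * r <= OPT_psi T.
Proof.
move=> [x [y [u [v [[hx hy hu hv] ->]]]]].
set zx := nz x; set zy := nz y; set zu := nz u; set zv := nz v.
set s := sig n0 zx zy zu zv.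
apply: (le_trans _ (overlap_le_opt T (sig_unit n0 zx zy zu zv))).
rewrite -/s (overlap_W n0).
set cx := \prod_r sc zx r; set cy := \prod_r sc zy r.
set cu := \prod_r sc zu r; set cv := \prod_r sc zv r.
have E : tpair T (W s ord0) (W s (lift ord0 ord0)) (W s (lift ord0 (lift ord0 ord0)))
    (W s (lift ord0 (lift ord0 (lift ord0 ord0)))) =
  tpair T (fun i => cx%:C%C * zx i) (fun i => cy%:C%C * zy i)
   (fun i => cu%:C%C * zu i) (fun i => cv%:C%C * zv i).
  by apply: tpair_ext => i; rewrite W_sig mulrC.
rewrite E.
rewrite tpair_scale /zx /zy /zu /zv /nz tpair_scale.
rewrite !cabsM !cabsR.
have hc : forall z : 'I_n -> C, N2 z = 1 -> expR (- 2^-1) <= \prod_r sc z r.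
  by move=> z hz; apply: prod_sc.
have gx := hc _ (N2_nz hx); have gy := hc _ (N2_nz hy).
have gu := hc _ (N2_nz hu); have gv := hc _ (N2_nz hv).
rewrite -/cx -/cy -/cu -/cv in gx gy gu gv.
have e0 : 0 <= expR (- 2^-1 : R) by apply: expR_ge0.
have e4 : expR (-2 : R) = expR (- 2^-1) * expR (- 2^-1) * expR (- 2^-1) * expR (- 2^-1).
  by rewrite -!expRD; congr expR; field.
rewrite !ger0_norm ?invr_ge0 ?vnorm2_ge0 ?(le_trans e0) //.
set t := cabs (tpair T x y u v).
have t0 : 0 <= t by apply: cabs_ge0.
rewrite -!invfM.
set N := vnorm2 x * vnorm2 y * vnorm2 u * vnorm2 v.
have hN : 0 <= N^-1 by rewrite invr_ge0 !mulr_ge0 ?vnorm2_ge0.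
have -> : (vnorm2 x * vnorm2 y * vnorm2 u * vnorm2 v)^-1 = N^-1 by [].
rewrite e4 (mulrC (N^-1) t).
apply: ler_wpM2r; first by rewrite mulr_ge0.
have ge : forall a : R, expR (- 2^-1) <= a -> 0 <= a by move=> a ha; apply: (le_trans e0 ha).
apply: ler_pM; rewrite ?mulr_ge0 ?ge //.
apply: ler_pM; rewrite ?mulr_ge0 ?ge //.
by apply: ler_pM; rewrite ?mulr_ge0 ?ge.
Qed.


Lemma lower n (n0 : (0 < n)%N) (T : tensor4 R n) : frob T = 1 ->
  expR (-2) * OPT_T T <= OPT_psi T.
Proof.
move=> hT.
have h : OPT_T T <= expR 2 * OPT_psi T.
  rewrite OPT_T_E; apply: ge_sup; first exact: setT_ne.
  move=> r hr; have := lower_elem n0 hr => hl.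
  have e : expR 2 * expR (-2) = 1 :> R by rewrite expRxMexpNx_1.
  have := ler_wpM2l (expR_ge0 2) hl; by rewrite mulrA e mul1r.
have e : expR (-2) * expR 2 = 1 :> R by rewrite mulrC expRxMexpNx_1.
have := ler_wpM2l (expR_ge0 (-2)) h; by rewrite mulrA e mul1r.
Qed.

Lemma prod4_le (a b c e a' b' c' e' : R) : 0 <= a -> 0 <= b -> 0 <= c -> 0 <= e ->
  a <= a' -> b <= b' -> c <= c' -> e <= e' -> a * b * c * e <= a' * b' * c' * e'.
Proof.
move=> a0 b0 c0 e0 ha hb hc he.
apply: ler_pM; rewrite ?mulr_ge0 //.
apply: ler_pM; rewrite ?mulr_ge0 //.
by apply: ler_pM.
Qed.

Lemma sum_cabs_ge0 n (x : 'I_n -> C) : 0 <= \sum_i cabs (x i).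
Proof. by apply: sumr_ge0 => i _; apply: cabs_ge0. Qed.

Lemma upper_elem n (n0 : (0 < n)%N) (T : tensor4 R n) sigma d :
  frob T = 1 -> (forall q, unit_qubit (sigma q)) -> 0 < d -> d <= 2^-1 ->
  cabs (overlap sigma (psiT T)) <=
  OPT_T T * (expR (-1) / (1 - d)) ^+ 2 +
  4%:R * (maxentry T * (2 / d) * Num.sqrt n%:R ^+ 3).
Proof.
move=> hT hs d0 d1.
rewrite (overlap_W n0).
set m0 : 'I_4 := ord0; set m1 : 'I_4 := lift ord0 ord0.
set m2 : 'I_4 := lift ord0 (lift ord0 ord0).
set m3 : 'I_4 := lift ord0 (lift ord0 (lift ord0 ord0)).
rewrite (tpair_dec T _ _ _ _ (Ws sigma m0 d) (Ws sigma m1 d) (Ws sigma m2 d) (Ws sigma m3 d)).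
set s := Num.sqrt n%:R.
set mu := maxentry T.
have mu0 : 0 <= mu by apply: maxentry_ge0.
have s0 : 0 <= s by apply: sqrtr_ge0.
set D2 := 2 / d.
have hd : 0 <= D2 by rewrite divr_ge0 // ltW.
have lX : forall m, \sum_i cabs (W sigma m i) <= s.
  by move=> m; apply: l1_le => //; apply: W_N2.
have lXs : forall m, \sum_i cabs (Ws sigma m d i) <= s.
  by move=> m; apply: l1_le => //; apply: Ws_N2le.
have lXb : forall m, \sum_i cabs (W sigma m i - Ws sigma m d i) <= D2.
  by move=> m; apply: Wb_l1.
clearbody D2.
set c := expR (-1) / (1 - d).
have c0 : 0 <= c by rewrite divr_ge0 ?expR_ge0 //; lra.
have vs : forall m, vnorm2 (Ws sigma m d) <= Num.sqrt c.
  move=> m; apply: ler_wsqrtr; apply: Ws_N2 => //; apply/andP; split => //; lra.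
have main : cabs (tpair T (Ws sigma m0 d) (Ws sigma m1 d) (Ws sigma m2 d) (Ws sigma m3 d))
    <= OPT_T T * c ^+ 2.
  apply: (le_trans (tpair_opt _ _ _ _ n0 hT)).
  apply: ler_wpM2l; first exact: OPT_T_ge0.
  have -> : c ^+ 2 = Num.sqrt c * Num.sqrt c * Num.sqrt c * Num.sqrt c.
    by rewrite -{1}(sqr_sqrtr c0); ring.
  by apply: prod4_le; rewrite ?vnorm2_ge0 ?vs.
have s3 : s ^+ 3 = s * s * s by rewrite !exprS expr0 mulr1 !mulrA.
have e1 : cabs (tpair T (fun i => W sigma m0 i - Ws sigma m0 d i) (W sigma m1) (W sigma m2)
    (W sigma m3)) <= mu * D2 * s ^+ 3.
  apply: (le_trans (tpair_bound _ _ _ _ _)).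
  rewrite s3 -!mulrA; apply: ler_wpM2l => //; rewrite !mulrA.
  apply: prod4_le; rewrite ?sum_cabs_ge0 //; by [apply: lX | apply: lXs | apply: lXb].
have e2 : cabs (tpair T (Ws sigma m0 d) (fun i => W sigma m1 i - Ws sigma m1 d i)
    (W sigma m2) (W sigma m3)) <= mu * D2 * s ^+ 3.
  apply: (le_trans (tpair_bound _ _ _ _ _)).
  have -> : mu * D2 * s ^+ 3 = mu * (s * D2 * s * s) by rewrite s3; ring.
  rewrite -!mulrA; apply: ler_wpM2l => //; rewrite !mulrA.
  apply: prod4_le; rewrite ?sum_cabs_ge0 //; by [apply: lX | apply: lXs | apply: lXb].
have e3 : cabs (tpair T (Ws sigma m0 d) (Ws sigma m1 d)
    (fun i => W sigma m2 i - Ws sigma m2 d i) (W sigma m3)) <= mu * D2 * s ^+ 3.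
  apply: (le_trans (tpair_bound _ _ _ _ _)).
  have -> : mu * D2 * s ^+ 3 = mu * (s * s * D2 * s) by rewrite s3; ring.
  rewrite -!mulrA; apply: ler_wpM2l => //; rewrite !mulrA.
  apply: prod4_le; rewrite ?sum_cabs_ge0 //; by [apply: lX | apply: lXs | apply: lXb].
have e4 : cabs (tpair T (Ws sigma m0 d) (Ws sigma m1 d) (Ws sigma m2 d)
    (fun i => W sigma m3 i - Ws sigma m3 d i)) <= mu * D2 * s ^+ 3.
  apply: (le_trans (tpair_bound _ _ _ _ _)).
  have -> : mu * D2 * s ^+ 3 = mu * (s * s * s * D2) by rewrite s3; ring.
  rewrite -!mulrA; apply: ler_wpM2l => //; rewrite !mulrA.
  apply: prod4_le; rewrite ?sum_cabs_ge0 //; by [apply: lX | apply: lXs | apply: lXb].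
set E := mu * D2 * s ^+ 3.
have -> : 4%:R * E = E + E + E + E by ring.
apply: (le_trans (cabsD _ _)); rewrite !addrA.
apply: lerD => //.
apply: (le_trans (cabsD _ _)); apply: lerD => //.
apply: (le_trans (cabsD _ _)); apply: lerD => //.
apply: (le_trans (cabsD _ _)); apply: lerD => //.
Qed.


Lemma upper n (n0 : (0 < n)%N) (T : tensor4 R n) d :
  frob T = 1 -> 0 < d -> d <= 2^-1 ->
  OPT_psi T <= OPT_T T * (expR (-1) / (1 - d)) ^+ 2 +
  4%:R * (maxentry T * (2 / d) * Num.sqrt n%:R ^+ 3).
Proof.
move=> hT d0 d1; rewrite OPT_psi_E; apply: ge_sup; first exact: setP_ne.
move=> r [sigma [hs ->]]; exact: upper_elem.
Qed.

End S.

Unset Implicit Arguments.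

Theorem lemma7p5 (R : realType) :
  exists n0 : nat, forall n : nat, (n0 <= n)%N ->
  forall T : tensor4 R n, frob T = 1 ->
  let M := (n%:R) ^+ 2 * maxentry T in
  expR (-2) * OPT_T T - 10 * M / powR (n%:R) (1 / 5) <= OPT_psi T /\
  OPT_psi T <= expR (-2) * OPT_T T + 10 / powR (n%:R) (1 / 10)
                + 10 * M / powR (n%:R) (1 / 5).
Proof.
exists 1024%N => n hn T hT M.
have n0 : (0 < n)%N by apply: leq_trans hn.
have nR : (1024 : R) <= n%:R by rewrite (ler_nat R 1024 n).
set w := powR (n%:R) (1 / 10).
have w0 : 0 <= w by apply: powR_ge0.
have w10 : w ^+ 10 = n%:R.
  rewrite /w -powR_mulrn // -powRrM.
  have -> : (1 / 10 * 10%:R : R) = 1 by field.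
  by rewrite powRr1 // ler0n.
have w5 : powR (n%:R) (1 / 5) = w ^+ 2.
  rewrite /w -powR_mulrn // -powRrM.
  by congr powR; field.
have s5 : Num.sqrt n%:R = w ^+ 5.
  rewrite -w10; have -> : w ^+ 10 = (w ^+ 5) ^+ 2 by rewrite -exprM.
  by rewrite sqrtr_sqr ger0_norm // exprn_ge0.
have w2 : 2 <= w.
  have : 2 ^+ 10 <= w ^+ 10 by rewrite w10; apply: le_trans nR; lra.
  by rewrite ler_pXn2r // ?nnegrE.
have wp : 0 < w by lra.
have mu0 := maxentry_ge0 T.
set mu := maxentry T in mu0 M *.
have M0 : 0 <= M by rewrite /M mulr_ge0 // sqr_ge0.
have O0 := OPT_T_ge0 n0 hT; have O1 := OPT_T_le1 n0 hT.
have E0 : 0 < expR (-2 : R) by apply: expR_gt0.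
have E1 : expR (-2 : R) <= 1 by rewrite expR_le1; lra.
rewrite w5; split.
  apply: (le_trans _ (lower n0 hT)).
  rewrite lerBlDr lerDl divr_ge0 ?mulr_ge0 ?exprn_ge0 //.
set d := w^-1.
have d0 : 0 < d by rewrite invr_gt0.
have d1 : d <= 2^-1 by rewrite lef_pV2 ?posrE //; lra.
apply: (le_trans (upper n0 hT d0 d1)).
rewrite s5; apply: lerD.
  have hdd : 0 < 1 - d by lra.
  have e2 : (expR (-1) / (1 - d)) ^+ 2 = expR (-2) / (1 - d) ^+ 2.
    by rewrite expr_div_n -expRM_natl; congr (expR _ / _); rewrite mulrN mulr1.
  rewrite e2.
  set O := OPT_T T; set E := expR (-2 : R).
  have hwd : 10 / w = 10 * d by [].
  have key : E / (1 - d) ^+ 2 <= E + 10 * d.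
    rewrite ler_pdivrMr ?exprn_gt0 //.
    have h1 : 0 <= d * (E * d) by rewrite !mulr_ge0 // ltW.
    have h2 : E * d <= d by rewrite ler_piMl // ltW.
    have h3 : 0 <= d * d by rewrite mulr_ge0 // ltW.
    have h4 : d * d <= d * 2^-1 by rewrite ler_wpM2l // ltW.
    have h5 : 0 <= d * (d * d) by rewrite !mulr_ge0 // ltW.
    rewrite expr2; nra.
  have k0 : E <= E / (1 - d) ^+ 2.
    rewrite ler_pdivlMr ?exprn_gt0 // ler_piMr ?ltW //.
    rewrite expr2; nra.
  have : O * (E / (1 - d) ^+ 2 - E) <= 1 * (E / (1 - d) ^+ 2 - E).
    by rewrite ler_wpM2r // subr_ge0.
  lra.
rewrite /M -w10.
have -> : 10 * ((w ^+ 10) ^+ 2 * mu) / w ^+ 2 = 10 * mu * w ^+ 18.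
  by field; rewrite gt_eqF.
have -> : 4%:R * (mu * (2 / d) * (w ^+ 5) ^+ 3) = 8 * mu * w ^+ 16.
  by rewrite /d invrK; ring.
have -> : w ^+ 18 = w ^+ 16 * (w * w) by rewrite -expr2 -exprD.
have w16 : 0 <= w ^+ 16 by apply: exprn_ge0.
have ww : 4 <= w * w by nra.
have : 0 <= mu * w ^+ 16 by apply: mulr_ge0.
nra.
Qed.
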